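(* The full subcategory $\mathsf{Cat}_{\mathrm{compl}}(\mathbb T)$ of $\mathsf{Cat}_{\mathrm{sep}}(\mathbb T)$ consisting of the L-complete L-separated $\mathbb T$-categories is an epi-reflective subcategory of $\mathsf{Cat}_{\mathrm{sep}}(\mathbb T)$. The reflection map of an L-separated $\mathbb T$-category $X$ is given by any fully faithful L-dense embedding of $X$ into an L-complete and L-separated $\mathbb T$-category, for instance by the Yoneda functor $y:X\to\tilde X$.
   Context: Let $\mathsf V=(\mathsf V,\otimes,k)$ be a commutative unital quantale (complete lattice, commutative associative $\otimes$ with neutral $k$, $u\otimes(-)$ preserving suprema), internal hom $z\le u\multimap v\iff z\otimes u\le v$. A $\mathsf V$-relation $r$ from $X$ to $Y$ is a map $X\times Y\to\mathsf V$; composition $(s\cdot r)(x,z)=\bigvee_y r(x,y)\otimes s(y,z)$, converse $r^\circ(y,x)=r(x,y)$, pointwise order; a map $f$ is the relation $f(x,y)=k$ if $f(x)=y$, $\bot$ otherwise. Let $\mathbb T=(T,e,m)$ be a Set-monad with $T1=1$, $T$ sending pullbacks to weak pullbacks and each naturality square of $m$ a weak pullback, and $\xi:T\mathsf V\to\mathsf V$ with $\xi e_{\mathsf V}=1$, $\xi\cdot T\xi=\xi\cdot m_{\mathsf V}$, $\xi\cdot T(\otimes)=\otimes\cdot\langle\xi T\pi_1,\xi T\pi_2\rangle$, $\xi\cdot Tk=k$, and such that $\varphi\mapsto\xi\cdot T\varphi$, $\mathsf V^X\to\mathsf V^{TX}$, is natural w.r.t. the monotone maps $P_{\mathsf V}f(\varphi)(y)=\bigvee_{f(x)=y}\varphi(x)$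 (a strict topological theory). For a relation $r$ from $X$ to $Y$ let $T_\xi r(\mathfrak x,\mathfrak y)=\bigvee\{\xi(Tr(\mathfrak w))\mid\mathfrak w\in T(X\times Y),T\pi_1\mathfrak w=\mathfrak x,T\pi_2\mathfrak w=\mathfrak y\}$. A $\mathbb T$-relation from $X$ to $Y$ is a $\mathsf V$-relation from $TX$ to $Y$; Kleisli composition $b\circ a=b\cdot T_\xi a\cdot m_X^\circ$. A $\mathbb T$-category $(X,a)$ has $k\le a(e_X(x),x)$ and $a\circ a\le a$; a $\mathbb T$-functor $f:(X,a)\to(Y,b)$ satisfies $a(\mathfrak x,x)\le b(Tf(\mathfrak x),f(x))$; subsets carry the induced structure. $E=(1,k)$. A $\mathbb T$-module $\varphi:(X,a)\to(Y,b)$ is a $\mathbb T$-relation with $\varphi\circ a\le\varphi$, $b\circ\varphi\le\varphi$. For a $\mathbb T$-functor $f:Z\to(X,a)$: $f_*(\mathfrak z,x)=a(Tf(\mathfrak z),x)$, $f^*(\mathfrak x,z)=a(\mathfrak x,f(z))$. For modules $\varphi:(Z,c)\to X$, $\psi:X\to Z$, $\varphi\dashv\psi$ means $c\le\psi\circ\varphi$, $\varphi\circ\psi\le a$. $f\le g$ iff $k\le a(e_X(f(z)),g(z))$ for all $z$; $f\cong g$ iff $f\le g\le f$; $X$ is L-separated if $f\cong g$ implies $f=g$; $\mathsf{Cat}_{\mathrm{sep}}(\mathbb T)$ is the full subcategory of L-separated ones. $X$ is L-complete if each adjunction $\varphi\dashv\psi$ ($\varphi:Z\to X$) is $f_*\dashv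 f^*$ for some $\mathbb T$-functor $f:Z\to X$. $f:(A,a)\to(B,b)$ is fully faithful if $a(\mathfrak x,x)=b(Tf(\mathfrak x),f(x))$ and L-dense if $f_*\circ f^*=b$. Yoneda: $\mathsf V$ is a $\mathbb T$-category with $\hom_\xi(\mathfrak v,v)=\xi(\mathfrak v)\multimap v$; $|X|=(TX,m_X)$; $|X|\multimap\mathsf V$ is the set of $\mathbb T$-functors $|X|\to\mathsf V$ with structure $[m_X,\hom_\xi](\mathfrak p,h)=\bigwedge\{\xi(T\mathrm{ev}(\mathfrak q))\multimap h(m_X(T\pi_1\mathfrak q))\mid\mathfrak q\in T(TX\times(|X|\multimap\mathsf V)),T\pi_2\mathfrak q=\mathfrak p\}$, $\mathrm{ev}(\mathfrak x,\varphi)=\varphi(\mathfrak x)$. With $r(\mathfrak x,\mathfrak y)=\bigvee_{m_X(\mathfrak X)=\mathfrak x}T_\xi a(\mathfrak X,\mathfrak y)$, $X^{\mathrm{op}}=(TX,c)$ with $c(\mathfrak X,\mathfrak y)=T_\xi(r^\circ)(\mathfrak X,e_{TX}(\mathfrak y))$. $\hat X\subseteq|X|\multimap\mathsf V$ consists of those $\psi$ that are also $\mathbb T$-functors $X^{\mathrm{op}}\to\mathsf V$; $y:X\to\hat X$, $y(x)(\mathfrak x)=a(\mathfrak x,x)$. Each $\psi\in\hat X$ is a $\mathbb T$-module $X\to E$, tight if it has a left adjoint; $\tilde X\subseteq\hat X$ is the set of tight elements (induced structure), and $y$ lands in $\tilde X$. *)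

(* Defs.v *)
From Stdlib Require Import Classical ClassicalDescription.

Record quantale := Quantale {
  qc :> Type;
  qle : qc -> qc -> Prop;
  qsup : (qc -> Prop) -> qc;
  qten : qc -> qc -> qc;
  qk : qc;
  qle_refl : forall u, qle u u;
  qle_trans : forall u v w, qle u v -> qle v w -> qle u w;
  qle_anti : forall u v, qle u v -> qle v u -> u = v;
  qsup_ub : forall (S : qc -> Prop) u, S u -> qle u (qsup S);
  qsup_least : forall (S : qc -> Prop) w, (forall u, S u -> qle u w) -> qle (qsup S) w;
  qten_comm : forall u v, qten u v = qten v u;
  qten_assoc : forall u v w, qten u (qten v w) = qten (qten u v) w;
  qten_unit : forall u, qten qk u = u;
  qten_sup : forall u (S : qc -> Prop),
    qten u (qsup S) = qsup (fun w => exists v, S v /\ w = qten u v)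
}.
Arguments qle {V} u v : rename.
Arguments qsup {V} S : rename.
Arguments qten {V} u v : rename.
Arguments qk {V} : rename.

Definition qbot {V : quantale} : V := qsup (fun _ => False).
Definition qinf {V : quantale} (S : V -> Prop) : V :=
  qsup (fun w => forall u, S u -> qle w u).
Definition qhom {V : quantale} (u v : V) : V :=
  qsup (fun z => qle (qten z u) v).

Record monad := Monad {
  mT :> Type -> Type;
  fmap : forall A B, (A -> B) -> mT A -> mT B;
  ret : forall A, A -> mT A;
  join : forall A, mT (mT A) -> mT A;
  fmap_id : forall A (x : mT A), fmap A A (fun a => a) x = x;
  fmap_comp : forall A B C (f : A -> B) (g : B -> C) x,
    fmap A C (fun a => g (f a)) x = fmap B C g (fmap A B f x);
  ret_nat : forall A B (f : A -> B) a, fmap A B f (ret A a) = ret B (f a);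
  join_nat : forall A B (f : A -> B) X,
    fmap A B f (join A X) = join B (fmap (mT A) (mT B) (fmap A B f) X);
  join_ret : forall A (x : mT A), join A (ret (mT A) x) = x;
  join_fmap_ret : forall A (x : mT A), join A (fmap A (mT A) (ret A) x) = x;
  join_assoc : forall A (X : mT (mT (mT A))),
    join A (join (mT A) X) = join A (fmap (mT (mT A)) (mT A) (join A) X)
}.
Arguments fmap {m A B} f x : rename.
Arguments ret {m A} a : rename.
Arguments join {m A} X : rename.

Definition T_one (T : monad) : Prop := forall u v : T unit, u = v.

(* T sends pullbacks to weak pullbacks *)
Definition T_weak_pb (T : monad) : Prop :=
  forall (A B C : Type) (f : A -> C) (g : B -> C) (x : T A) (y : T B),
    fmap f x = fmap g y ->
    exists w : T {p : A * B | f (fst p) = g (snd p)},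
      fmap (fun p => fst (proj1_sig p)) w = x /\
      fmap (fun p => snd (proj1_sig p)) w = y.

(* each naturality square of m is a weak pullback *)
Definition join_weak_pb (T : monad) : Prop :=
  forall (A B : Type) (f : A -> B) (XX : T (T B)) (x : T A),
    join XX = fmap f x ->
    exists YY : T (T A), fmap (fmap f) YY = XX /\ join YY = x.

Definition PV {V : quantale} {X Y : Type} (f : X -> Y) (phi : X -> V) : Y -> V :=
  fun y => qsup (fun v => exists x, f x = y /\ v = phi x).

Definition strict_topth {V : quantale} {T : monad} (xi : T V -> V) : Prop :=
  (forall v : V, xi (ret v) = v) /\
  (forall XX : T (T V), xi (fmap xi XX) = xi (join XX)) /\
  (forall w : T (V * V)%type,
      xi (fmap (fun p => qten (fst p) (snd p)) w)
      = qten (xi (fmap fst w)) (xi (fmap snd w))) /\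
  (forall u : T unit, xi (fmap (fun _ : unit => (qk : V)) u) = qk) /\
  (forall (X Y : Type) (f : X -> Y) (phi : X -> V) (y : T Y),
      xi (fmap (PV f phi) y) = PV (fmap f) (fun x => xi (fmap phi x)) y).

Definition relcomp {V : quantale} {X Y Z : Type}
  (s : Y -> Z -> V) (r : X -> Y -> V) : X -> Z -> V :=
  fun x z => qsup (fun v => exists y, v = qten (r x y) (s y z)).

Definition graph {V : quantale} {X Y : Type} (f : X -> Y) : X -> Y -> V :=
  fun x y => if excluded_middle_informative (f x = y) then qk else qbot.

Definition converse {V : quantale} {X Y : Type} (r : X -> Y -> V) : Y -> X -> V :=
  fun y x => r x y.

Definition Txi {V : quantale} {T : monad} (xi : T V -> V) {X Y : Type}
  (r : X -> Y -> V) : T X -> T Y -> V :=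
  fun x y => qsup (fun v => exists w : T (X * Y)%type,
      fmap fst w = x /\ fmap snd w = y /\
      v = xi (fmap (fun p => r (fst p) (snd p)) w)).

Definition kleisli {V : quantale} {T : monad} (xi : T V -> V) {X Y Z : Type}
  (b : T Y -> Z -> V) (a : T X -> Y -> V) : T X -> Z -> V :=
  relcomp b (relcomp (Txi xi a) (converse (graph (@join T X)))).

Definition Tcat {V : quantale} {T : monad} (xi : T V -> V) {X : Type}
  (a : T X -> X -> V) : Prop :=
  (forall x, qle qk (a (ret x) x)) /\
  (forall x0 x, qle (kleisli xi a a x0 x) (a x0 x)).

Definition Tfun {V : quantale} {T : monad} {X Y : Type}
  (a : T X -> X -> V) (b : T Y -> Y -> V) (f : X -> Y) : Prop :=
  forall x0 x, qle (a x0 x) (b (fmap f x0) (f x)).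

Definition Tmod {V : quantale} {T : monad} (xi : T V -> V) {X Y : Type}
  (a : T X -> X -> V) (b : T Y -> Y -> V) (phi : T X -> Y -> V) : Prop :=
  (forall x0 y, qle (kleisli xi phi a x0 y) (phi x0 y)) /\
  (forall x0 y, qle (kleisli xi b phi x0 y) (phi x0 y)).

Definition flow {V : quantale} {T : monad} {Z X : Type}
  (a : T X -> X -> V) (f : Z -> X) : T Z -> X -> V :=
  fun z0 x => a (fmap f z0) x.
Definition fup {V : quantale} {T : monad} {Z X : Type}
  (a : T X -> X -> V) (f : Z -> X) : T X -> Z -> V :=
  fun x0 z => a x0 (f z).

Definition adjoint {V : quantale} {T : monad} (xi : T V -> V) {Z X : Type}
  (c : T Z -> Z -> V) (a : T X -> X -> V)
  (phi : T Z -> X -> V) (psi : T X -> Z -> V) : Prop :=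
  (forall z0 z, qle (c z0 z) (kleisli xi psi phi z0 z)) /\
  (forall x0 x, qle (kleisli xi phi psi x0 x) (a x0 x)).

Definition fle {V : quantale} {T : monad} {Z X : Type}
  (a : T X -> X -> V) (f g : Z -> X) : Prop :=
  forall z, qle qk (a (ret (f z)) (g z)).

Definition Lsep {V : quantale} {T : monad} (xi : T V -> V) {X : Type}
  (a : T X -> X -> V) : Prop :=
  forall (Z : Type) (c : T Z -> Z -> V), Tcat xi c ->
  forall f g : Z -> X, Tfun c a f -> Tfun c a g ->
    fle a f g -> fle a g f -> forall z, f z = g z.

Definition Lcomplete {V : quantale} {T : monad} (xi : T V -> V) {X : Type}
  (a : T X -> X -> V) : Prop :=
  forall (Z : Type) (c : T Z -> Z -> V), Tcat xi c ->
  forall (phi : T Z -> X -> V) (psi : T X -> Z -> V),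
    Tmod xi c a phi -> Tmod xi a c psi -> adjoint xi c a phi psi ->
    exists f : Z -> X, Tfun c a f /\
      (forall z0 x, phi z0 x = flow a f z0 x) /\
      (forall x0 z, psi x0 z = fup a f x0 z).

Definition ffaithful {V : quantale} {T : monad} {A B : Type}
  (a : T A -> A -> V) (b : T B -> B -> V) (f : A -> B) : Prop :=
  forall x0 x, a x0 x = b (fmap f x0) (f x).

Definition Ldense {V : quantale} {T : monad} (xi : T V -> V) {A B : Type}
  (b : T B -> B -> V) (f : A -> B) : Prop :=
  forall y0 y, kleisli xi (flow b f) (fup b f) y0 y = b y0 y.

Definition induced {V : quantale} {T : monad} {Y : Type} (P : Y -> Prop)
  (b : T Y -> Y -> V) : T {y : Y | P y} -> {y : Y | P y} -> V :=
  fun s0 s => b (fmap (@proj1_sig Y P) s0) (proj1_sig s).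

Definition homxi {V : quantale} {T : monad} (xi : T V -> V) : T V -> V -> V :=
  fun v0 v => qhom (xi v0) v.

Definition absstr {V : quantale} (T : monad) (X : Type) : T (T X) -> T X -> V :=
  graph (@join T X).

Definition LVpred {V : quantale} {T : monad} (xi : T V -> V) (X : Type)
  (h : T X -> V) : Prop := Tfun (absstr T X) (homxi xi) h.
Definition LV {V : quantale} {T : monad} (xi : T V -> V) (X : Type) : Type :=
  {h : T X -> V | LVpred xi X h}.

Definition LVstr {V : quantale} {T : monad} (xi : T V -> V) (X : Type)
  : T (LV xi X) -> LV xi X -> V :=
  fun p h => qinf (fun v => exists q : T (T X * LV xi X)%type,
      fmap snd q = p /\
      v = qhom (xi (fmap (fun u => proj1_sig (snd u) (fst u)) q))
               (proj1_sig h (join (fmap fst q)))).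

Definition opstr {V : quantale} {T : monad} (xi : T V -> V) {X : Type}
  (a : T X -> X -> V) : T (T X) -> T X -> V :=
  let r : T X -> T X -> V :=
      fun x y => qsup (fun v => exists XX : T (T X), join XX = x /\ v = Txi xi a XX y) in
  fun XX y => Txi xi (converse r) XX (ret y).

Definition hatpred {V : quantale} {T : monad} (xi : T V -> V) {X : Type}
  (a : T X -> X -> V) (h : LV xi X) : Prop :=
  Tfun (opstr xi a) (homxi xi) (proj1_sig h).
Definition hatX {V : quantale} {T : monad} (xi : T V -> V) {X : Type}
  (a : T X -> X -> V) : Type := {h : LV xi X | hatpred xi a h}.
Definition hatstr {V : quantale} {T : monad} (xi : T V -> V) {X : Type}
  (a : T X -> X -> V) : T (hatX xi a) -> hatX xi a -> V :=
  @induced V T (LV xi X) (hatpred xi a) (LVstr xi X).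

Definition Estr {V : quantale} {T : monad} : T unit -> unit -> V := fun _ _ => qk.

Definition asmod {V : quantale} {T : monad} {xi : T V -> V} {X : Type}
  {a : T X -> X -> V} (psi : hatX xi a) : T X -> unit -> V :=
  fun x0 _ => proj1_sig (proj1_sig psi) x0.

Definition tight {V : quantale} {T : monad} (xi : T V -> V) {X : Type}
  (a : T X -> X -> V) (psi : hatX xi a) : Prop :=
  exists phi : T unit -> X -> V, Tmod xi Estr a phi /\ adjoint xi Estr a phi (asmod psi).

Definition tildeX {V : quantale} {T : monad} (xi : T V -> V) {X : Type}
  (a : T X -> X -> V) : Type := {psi : hatX xi a | tight xi a psi}.
Definition tildestr {V : quantale} {T : monad} (xi : T V -> V) {X : Type}
  (a : T X -> X -> V) : T (tildeX xi a) -> tildeX xi a -> V :=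
  induced (tight xi a) (hatstr xi a).

Definition tilde_fun {V : quantale} {T : monad} {xi : T V -> V} {X : Type}
  {a : T X -> X -> V} (psi : tildeX xi a) : T X -> V :=
  proj1_sig (proj1_sig (proj1_sig psi)).

Definition reflection_arrow {V : quantale} {T : monad} (xi : T V -> V) {X Y : Type}
  (a : T X -> X -> V) (b : T Y -> Y -> V) (i : X -> Y) : Prop :=
  Tfun a b i /\
  forall (Z : Type) (c : T Z -> Z -> V), Tcat xi c -> Lcomplete xi c -> Lsep xi c ->
  forall f : X -> Z, Tfun a c f ->
    exists g : Y -> Z, Tfun b c g /\ (forall x, g (i x) = f x) /\
      (forall g' : Y -> Z, Tfun b c g' -> (forall x, g' (i x) = f x) ->
         forall y, g' y = g y).

Definition epi_sep {V : quantale} {T : monad} (xi : T V -> V) {X Y : Type}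
  (b : T Y -> Y -> V) (i : X -> Y) : Prop :=
  forall (W : Type) (d : T W -> W -> V), Tcat xi d -> Lsep xi d ->
  forall g h : Y -> W, Tfun b d g -> Tfun b d h ->
    (forall x, g (i x) = h (i x)) -> forall y, g y = h y.

(* Main.v *)
Require Import Defs.
From Stdlib Require Import Classical ClassicalDescription FunctionalExtensionality ProofIrrelevance.

Section Q.
Context {V : quantale}.
Implicit Types u v w z : V.

Lemma le_refl u : qle u u. Proof. apply qle_refl. Qed.
Lemma le_trans u v w : qle u v -> qle v w -> qle u w. Proof. apply qle_trans. Qed.
Lemma bot_le u : qle qbot u.
Proof. unfold qbot. apply qsup_least. intros ? []. Qed.

Lemma ten_mono_r u v v' : qle v v' -> qle (qten u v) (qten u v').
Proof.
  intro H.
  assert (E : qsup (fun w => w = v \/ w = v') = v').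
  { apply qle_anti.
    - apply qsup_least. intros w [->| ->]; [exact H| apply le_refl].
    - apply qsup_ub. now right. }
  rewrite <- E. rewrite qten_sup. apply qsup_ub. exists v. split; auto.
Qed.
Lemma ten_mono_l u u' v : qle u u' -> qle (qten u v) (qten u' v).
Proof. intro H. rewrite (qten_comm _ u), (qten_comm _ u'). now apply ten_mono_r. Qed.
Lemma ten_mono u u' v v' : qle u u' -> qle v v' -> qle (qten u v) (qten u' v').
Proof. intros. eapply le_trans. apply ten_mono_l; eauto. now apply ten_mono_r. Qed.
Lemma ten_k_r u : qten u qk = u. Proof. rewrite qten_comm. apply qten_unit. Qed.

Lemma ten_sup_r_le u (S : V -> Prop) w :
  (forall v, S v -> qle (qten u v) w) -> qle (qten u (qsup S)) w.
Proof. intro H. rewrite qten_sup. apply qsup_least. intros ? [v [Hv ->]]. auto. Qed.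
Lemma ten_sup_l_le u (S : V -> Prop) w :
  (forall v, S v -> qle (qten v u) w) -> qle (qten (qsup S) u) w.
Proof. intro H. rewrite qten_comm. apply ten_sup_r_le. intros. rewrite qten_comm. auto. Qed.
Lemma ten_bot_r u : qten u qbot = qbot.
Proof. apply qle_anti; [|apply bot_le]. unfold qbot at 1. apply ten_sup_r_le. intros ? []. Qed.
Lemma ten_bot_l u : qten qbot u = qbot.
Proof. rewrite qten_comm. apply ten_bot_r. Qed.

Lemma sup_ub_le (S : V -> Prop) u w : S u -> qle w u -> qle w (qsup S).
Proof. intros. eapply le_trans; eauto. now apply qsup_ub. Qed.

Lemma hom_intro z u v : qle (qten z u) v -> qle z (qhom u v).
Proof. intro. unfold qhom. now apply qsup_ub. Qed.
Lemma hom_elim z u v : qle z (qhom u v) -> qle (qten z u) v.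
Proof.
  intro H. eapply le_trans. apply ten_mono_l. exact H.
  unfold qhom. apply ten_sup_l_le. auto.
Qed.
Lemma hom_eval u v : qle (qten (qhom u v) u) v.
Proof. apply hom_elim, le_refl. Qed.
Lemma inf_lb (S : V -> Prop) u : S u -> qle (qinf S) u.
Proof. intro. unfold qinf. apply qsup_least. auto. Qed.
Lemma inf_glb (S : V -> Prop) w : (forall u, S u -> qle w u) -> qle w (qinf S).
Proof. intro. unfold qinf. now apply qsup_ub. Qed.
Lemma hom_k u : qhom qk u = u.
Proof.
  apply qle_anti.
  - eapply le_trans; [|apply hom_eval]. rewrite ten_k_r. apply le_refl.
  - apply hom_intro. rewrite ten_k_r. apply le_refl.
Qed.
Lemma hom_anti u u' v : qle u u' -> qle (qhom u' v) (qhom u v).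
Proof. intro. apply hom_intro. eapply le_trans; [|apply hom_eval]. now apply ten_mono_r. Qed.
Lemma ten_swap u v w : qten u (qten v w) = qten v (qten u w).
Proof. rewrite !qten_assoc. f_equal. apply qten_comm. Qed.
Lemma ten_sup_m_le u (S : V -> Prop) e c :
  (forall v, S v -> qle (qten u (qten v e)) c) -> qle (qten u (qten (qsup S) e)) c.
Proof.
  intro H. rewrite ten_swap. apply ten_sup_l_le. intros v Hv. rewrite ten_swap. auto.
Qed.
End Q.

Existing Class T_one. Existing Class T_weak_pb. Existing Class join_weak_pb.
Existing Class strict_topth.

Section M.
Context {V : quantale} {T : monad} (xi : T V -> V)
  {HT1 : T_one T} {Hpb : T_weak_pb T} {Hm : join_weak_pb T} {Hxi : strict_topth xi}.

Lemma fmap_ext {A B} (f g : A -> B) (t : T A) : (forall x, f x = g x) -> fmap f t = fmap g t.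
Proof. intro H. replace g with f; auto. now apply functional_extensionality. Qed.

Lemma fmap_fmap {A B C} (f : A -> B) (g : B -> C) (t : T A) :
  fmap g (fmap f t) = fmap (fun x => g (f x)) t.
Proof. symmetry. apply fmap_comp. Qed.

Lemma fmap_const {A B} (c : B) (t : T A) : fmap (fun _ => c) t = ret c.
Proof.
  rewrite (fmap_comp T A unit B (fun _ => tt) (fun _ => c)).
  rewrite (HT1 (fmap (fun _ => tt) t) (ret tt)). apply ret_nat.
Qed.

Lemma join_fmap_ret' {A} (t : T A) : join (fmap (fun x => ret x) t) = t.
Proof. apply join_fmap_ret. Qed.

Lemma xi_ret v : xi (ret v) = v. Proof. apply (proj1 Hxi). Qed.
Lemma xi_join (XX : T (T V)) : xi (fmap xi XX) = xi (join XX).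
Proof. apply (proj1 (proj2 Hxi)). Qed.
Lemma xi_const {A} (c : V) (t : T A) : xi (fmap (fun _ => c) t) = c.
Proof. rewrite fmap_const. apply xi_ret. Qed.

Lemma xi_ten {A} (f g : A -> V) (t : T A) :
  xi (fmap (fun x => qten (f x) (g x)) t) = qten (xi (fmap f t)) (xi (fmap g t)).
Proof.
  pose proof (proj1 (proj2 (proj2 Hxi)) (fmap (fun x => (f x, g x)) t)) as H.
  rewrite !fmap_fmap in H. simpl in H. exact H.
Qed.

Lemma xi_PV {X Y} (f : X -> Y) (phi : X -> V) (y : T Y) :
  xi (fmap (PV f phi) y) = PV (fmap f) (fun x => xi (fmap phi x)) y.
Proof. apply (proj2 (proj2 (proj2 (proj2 Hxi)))). Qed.

Lemma xi_mono {A} (f g : A -> V) (t : T A) :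
  (forall x, qle (f x) (g x)) -> qle (xi (fmap f t)) (xi (fmap g t)).
Proof.
  intro H.
  set (h := fun s : A + A => match s with inl x => x | inr x => x end).
  set (ph := fun s : A + A => match s with inl x => f x | inr x => g x end).
  assert (E : forall x, PV h ph x = g x).
  { intro x. apply qle_anti.
    - unfold PV. apply qsup_least. intros v [[s|s] [<- ->]]; simpl; [apply H|apply le_refl].
    - unfold PV. apply qsup_ub. exists (inr x). auto. }
  rewrite <- (fmap_ext _ _ t E). rewrite xi_PV. unfold PV.
  apply qsup_ub. exists (fmap inl t). split.
  - rewrite fmap_fmap. simpl. apply fmap_id.
  - rewrite fmap_fmap. reflexivity.
Qed.

Lemma xi_mono_le {A} (f : A -> V) (t : T A) c :
  (forall x, qle (f x) c) -> qle (xi (fmap f t)) c.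
Proof. intro H. rewrite <- (xi_const c t). now apply xi_mono. Qed.
Lemma xi_mono_ge {A} (f : A -> V) (t : T A) c :
  (forall x, qle c (f x)) -> qle c (xi (fmap f t)).
Proof. intro H. rewrite <- (xi_const c t) at 1. now apply xi_mono. Qed.

Lemma Txi_ge {X Y} (r : X -> Y -> V) (w : T (X * Y)%type) x y :
  fmap fst w = x -> fmap snd w = y ->
  qle (xi (fmap (fun p => r (fst p) (snd p)) w)) (Txi xi r x y).
Proof. intros. unfold Txi. apply qsup_ub. exists w. auto. Qed.

Lemma Txi_le {X Y} (r : X -> Y -> V) x y c :
  (forall w : T (X * Y)%type, fmap fst w = x -> fmap snd w = y ->
     qle (xi (fmap (fun p => r (fst p) (snd p)) w)) c) -> qle (Txi xi r x y) c.
Proof. intro H. unfold Txi. apply qsup_least. intros v [w [H1 [H2 ->]]]. auto. Qed.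

Lemma Txi_mono {X Y} (r s : X -> Y -> V) x y :
  (forall a b, qle (r a b) (s a b)) -> qle (Txi xi r x y) (Txi xi s x y).
Proof.
  intro H. apply Txi_le. intros w H1 H2. eapply le_trans; [|apply (Txi_ge s w); auto].
  apply xi_mono. auto.
Qed.

Lemma Txi_nat {X Y X' Y'} (r : X' -> Y' -> V) (al : X -> X') (be : Y -> Y') x y :
  qle (Txi xi (fun a b => r (al a) (be b)) x y) (Txi xi r (fmap al x) (fmap be y)).
Proof.
  apply Txi_le. intros w H1 H2.
  eapply le_trans; [|apply (Txi_ge r (fmap (fun p => (al (fst p), be (snd p))) w))].
  - rewrite fmap_fmap. apply le_refl.
  - rewrite fmap_fmap, <- H1, fmap_fmap. reflexivity.
  - rewrite fmap_fmap, <- H2, fmap_fmap. reflexivity.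
Qed.

Lemma Txi_ret {X Y} (r : X -> Y -> V) x y : qle (r x y) (Txi xi r (ret x) (ret y)).
Proof.
  eapply le_trans; [|apply (Txi_ge r (ret (x, y)))].
  - rewrite ret_nat, xi_ret. apply le_refl.
  - now rewrite ret_nat.
  - now rewrite ret_nat.
Qed.

Lemma Txi_diag {X} (r : X -> X -> V) (x : T X) c :
  (forall a, qle c (r a a)) -> qle c (Txi xi r x x).
Proof.
  intro H. eapply le_trans; [|apply (Txi_ge r (fmap (fun a => (a, a)) x))].
  - rewrite fmap_fmap. apply xi_mono_ge. simpl. auto.
  - rewrite fmap_fmap. apply fmap_id.
  - rewrite fmap_fmap. apply fmap_id.
Qed.

Lemma Txi_pt {X Y} (r : X -> Y -> V) (x : T X) (y : Y) :
  qle (xi (fmap (fun a => r a y) x)) (Txi xi r x (ret y)).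
Proof.
  eapply le_trans; [|apply (Txi_ge r (fmap (fun a => (a, y)) x))].
  - rewrite fmap_fmap. apply le_refl.
  - rewrite fmap_fmap. apply fmap_id.
  - rewrite fmap_fmap. simpl. apply fmap_const.
Qed.

Lemma Txi_pt_le {X Y} (r : X -> Y -> V) (x : T X) (y : Y) :
  qle (Txi xi r x (ret y)) (xi (fmap (fun a => r a y) x)).
Proof.
  apply Txi_le. intros w H1 H2.
  destruct (Hpb _ _ _ snd (fun _ : unit => y) w (ret tt)) as [W [W1 W2]].
  { rewrite H2. now rewrite ret_nat. }
  subst x. subst w. rewrite !fmap_fmap.
  apply xi_mono. intros [[[a b] u] e]. simpl in *. subst. apply le_refl.
Qed.

Lemma Txi_comp {X Y Z} (r : X -> Y -> V) (s : Y -> Z -> V) x y z :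
  qle (qten (Txi xi r x y) (Txi xi s y z)) (Txi xi (relcomp s r) x z).
Proof.
  apply ten_sup_l_le. intros v [w1 [A1 [A2 ->]]].
  apply ten_sup_r_le. intros v [w2 [B1 [B2 ->]]].
  destruct (Hpb _ _ _ snd fst w1 w2) as [W [W1 W2]]. { congruence. }
  eapply le_trans; [|apply (Txi_ge _ (fmap (fun p => (fst (fst (proj1_sig p)), snd (snd (proj1_sig p)))) W))].
  - subst w1 w2. rewrite !fmap_fmap, <- xi_ten. apply xi_mono.
    intros [[[a b] [b' c]] e]. simpl in *. unfold relcomp.
    apply qsup_ub. exists b. now rewrite e.
  - rewrite fmap_fmap, <- A1, <- W1, fmap_fmap. reflexivity.
  - rewrite fmap_fmap, <- B2, <- W2, fmap_fmap. reflexivity.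
Qed.

End M.

Section K.
Context {V : quantale} {T : monad} (xi : T V -> V)
  {HT1 : T_one T} {Hpb : T_weak_pb T} {Hm : join_weak_pb T} {Hxi : strict_topth xi}.

Definition rle {A B} (r s : A -> B -> V) := forall x y, qle (r x y) (s x y).

Lemma kl_ge {X Y Z} (b : T Y -> Z -> V) (a : T X -> Y -> V) x0 z X0 y1 :
  join X0 = x0 -> qle (qten (Txi xi a X0 y1) (b y1 z)) (kleisli xi b a x0 z).
Proof.
  intro E. unfold kleisli, relcomp.
  eapply le_trans; [|apply qsup_ub; exists y1; reflexivity].
  apply ten_mono_l. eapply le_trans; [|apply qsup_ub; exists X0; reflexivity].
  unfold converse, graph. destruct (excluded_middle_informative (join X0 = x0)); [|contradiction].
  rewrite qten_unit. apply le_refl.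
Qed.

Lemma kl_le {X Y Z} (b : T Y -> Z -> V) (a : T X -> Y -> V) x0 z c :
  (forall X0 y1, join X0 = x0 -> qle (qten (Txi xi a X0 y1) (b y1 z)) c) ->
  qle (kleisli xi b a x0 z) c.
Proof.
  intro H. unfold kleisli, relcomp. apply qsup_least. intros v [y1 ->].
  apply ten_sup_l_le. intros v [X0 ->].
  unfold converse, graph. destruct (excluded_middle_informative (join X0 = x0)).
  - rewrite qten_unit. auto.
  - rewrite ten_bot_l, ten_bot_l. apply bot_le.
Qed.

Lemma kl_eq_sup {X Y Z} (b : T Y -> Z -> V) (a : T X -> Y -> V) x0 z :
  kleisli xi b a x0 z =
  qsup (fun v => exists X0 y1, join X0 = x0 /\ v = qten (Txi xi a X0 y1) (b y1 z)).
Proof.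
  apply qle_anti.
  - apply kl_le. intros. apply qsup_ub. eauto.
  - apply qsup_least. intros v [X0 [y1 [E ->]]]. now apply kl_ge.
Qed.

Lemma kl_ten_le {X Y Z} (b : T Y -> Z -> V) (a : T X -> Y -> V) x0 z u c :
  (forall X0 y1, join X0 = x0 -> qle (qten u (qten (Txi xi a X0 y1) (b y1 z))) c) ->
  qle (qten u (kleisli xi b a x0 z)) c.
Proof.
  intro H. rewrite kl_eq_sup. apply ten_sup_r_le. intros v [X0 [y1 [E ->]]]. auto.
Qed.

Lemma kl_mono {X Y Z} (b b' : T Y -> Z -> V) (a a' : T X -> Y -> V) :
  rle a a' -> rle b b' -> rle (kleisli xi b a) (kleisli xi b' a').
Proof.
  intros Ha Hb x0 z. apply kl_le. intros X0 y1 E.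
  eapply le_trans; [|apply (kl_ge _ _ _ _ X0 y1 E)].
  apply ten_mono; auto. now apply Txi_mono.
Qed.

End K.

Section A.
Context {V : quantale} {T : monad} (xi : T V -> V)
  {HT1 : T_one T} {Hpb : T_weak_pb T} {Hm : join_weak_pb T} {Hxi : strict_topth xi}.

Lemma assoc_le {X Y Z W} (a : T X -> Y -> V) (b : T Y -> Z -> V) (c : T Z -> W -> V) :
  rle (kleisli xi (kleisli xi c b) a) (kleisli xi c (kleisli xi b a)).
Proof.
  intros x0 w. apply kl_le. intros X0 y1 E.
  apply kl_ten_le. intros Y0 z1 E2. subst y1.
  unfold Txi at 1. apply ten_sup_l_le. intros v [w1 [A1 [A2 ->]]].
  apply ten_sup_m_le. intros v [u [B1 [B2 ->]]].
  rewrite qten_assoc.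
  destruct (Hm _ _ snd Y0 w1) as [WW [WW1 WW2]]. { now symmetry. }
  destruct (Hpb _ _ _ (fmap snd) fst WW u) as [Q [Q1 Q2]]. { congruence. }
  set (g := fun p : {p : (T (T X * Y)%type * (T Y * Z))%type | fmap snd (fst p) = fst (snd p)} =>
              (join (fmap fst (fst (proj1_sig p))), snd (snd (proj1_sig p)))).
  assert (Hz : fmap snd (fmap g Q) = z1).
  { rewrite fmap_fmap. subst z1 u. rewrite fmap_fmap. reflexivity. }
  assert (HX : join (fmap fst (fmap g Q)) = x0).
  { subst x0. rewrite fmap_fmap. unfold g. simpl.
    rewrite <- (fmap_fmap (fun p => fmap fst (fst (proj1_sig p))) join).
    rewrite <- join_assoc. rewrite <- (fmap_fmap (fun p => fst (proj1_sig p)) (fmap fst)).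
    rewrite Q1. rewrite <- join_nat. rewrite WW2. now rewrite A1. }
  eapply le_trans; [| apply (kl_ge xi _ _ _ _ (fmap fst (fmap g Q)) z1 HX)].
  apply ten_mono_l.
  eapply le_trans; [| apply (Txi_ge _ _ (fmap g Q)); auto].
  rewrite fmap_fmap.
  apply le_trans with (xi (fmap (fun p => qten (xi (fmap (fun t => a (fst t) (snd t)) (fst (proj1_sig p))))
                                               (b (fst (snd (proj1_sig p))) (snd (snd (proj1_sig p))))) Q)).
  - rewrite xi_ten; auto. apply ten_mono.
    + rewrite <- (fmap_fmap (fun p => fst (proj1_sig p)) (fun W => xi (fmap _ W))).
      rewrite Q1. rewrite <- (fmap_fmap (fmap (fun t => a (fst t) (snd t))) xi).
      rewrite xi_join; auto. rewrite <- join_nat. rewrite WW2. apply le_refl.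
    + rewrite <- (fmap_fmap (fun p => snd (proj1_sig p)) (fun q => b (fst q) (snd q))).
      rewrite Q2. apply le_refl.
  - apply xi_mono; auto. intros [[W0 [y z]] e]. unfold g. simpl in *.
    eapply le_trans; [|apply (kl_ge xi _ _ _ _ (fmap fst W0) (fmap snd W0) eq_refl)].
    rewrite e. apply ten_mono_l. apply Txi_ge; auto.
Qed.

Lemma assoc_ge {X Y Z W} (a : T X -> Y -> V) (b : T Y -> Z -> V) (c : T Z -> W -> V) :
  rle (kleisli xi c (kleisli xi b a)) (kleisli xi (kleisli xi c b) a).
Proof.
  intros x0 w. apply kl_le. intros X0 z1 E.
  apply ten_sup_l_le. intros v [q [C1 [C2 ->]]].
  set (f := fun e : (T (T X * Y)%type * Z)%type => (join (fmap fst (fst e)), snd e)).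
  set (ph := fun e : (T (T X * Y)%type * Z)%type =>
               qten (xi (fmap (fun t => a (fst t) (snd t)) (fst e))) (b (fmap snd (fst e)) (snd e))).
  apply le_trans with (qten (xi (fmap (PV f ph) q)) (c z1 w)).
  { apply ten_mono_l. apply xi_mono; auto. intros [x z]. simpl.
    apply kl_le. intros X1 y1 E1. apply ten_sup_l_le. intros v [w1 [D1 [D2 ->]]].
    unfold PV. apply qsup_ub. exists (w1, z). split.
    - unfold f; simpl. now rewrite D1, E1.
    - unfold ph; simpl. now rewrite D2. }
  rewrite xi_PV; auto. unfold PV at 1. apply ten_sup_l_le. intros v [al [F ->]].
  set (Wj := join (fmap fst al)).
  assert (HX : join (fmap fst Wj) = x0).
  { subst x0 X0 q Wj. rewrite join_nat, join_assoc, !fmap_fmap. unfold f. simpl.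
    try (f_equal; apply fmap_ext; intros; symmetry; apply join_nat). }
  eapply le_trans; [|apply (kl_ge xi _ _ _ _ (fmap fst Wj) (fmap snd Wj) HX)].
  unfold ph. rewrite xi_ten; auto. rewrite <- qten_assoc. apply ten_mono.
  - eapply le_trans; [|apply Txi_ge; auto]. unfold Wj.
    rewrite join_nat, <- xi_join; auto. rewrite !fmap_fmap. apply le_refl.
  - assert (Hy : join (fmap (fun e => fmap snd (fst e)) al) = fmap snd Wj).
    { unfold Wj. rewrite join_nat, fmap_fmap. reflexivity. }
    eapply le_trans; [|apply (kl_ge xi _ _ _ w _ z1 Hy)].
    apply ten_mono_l.
    eapply le_trans; [|apply (Txi_ge _ _ (fmap (fun e => (fmap snd (fst e), snd e)) al))].
    + rewrite fmap_fmap. apply le_refl.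
    + rewrite fmap_fmap. reflexivity.
    + rewrite fmap_fmap, <- C2, <- F, fmap_fmap. reflexivity.
Qed.

End A.

Section C.
Context {V : quantale} {T : monad} (xi : T V -> V)
  {HT1 : T_one T} {Hpb : T_weak_pb T} {Hm : join_weak_pb T} {Hxi : strict_topth xi}.

Lemma rle_refl {A B} (r : A -> B -> V) : rle r r.
Proof. intros ? ?; apply le_refl. Qed.
Lemma rle_trans {A B} (r s t : A -> B -> V) : rle r s -> rle s t -> rle r t.
Proof. intros H1 H2 x y. eapply le_trans; eauto. Qed.

Lemma Txi_nat_l {X Y X'} (r : X' -> Y -> V) (al : X -> X') x y :
  qle (Txi xi (fun a b => r (al a) b) x y) (Txi xi r (fmap al x) y).
Proof.
  rewrite <- (fmap_id T Y y) at 2. apply (Txi_nat xi r al (fun b => b)).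
Qed.
Lemma Txi_nat_r {X Y Y'} (r : X -> Y' -> V) (be : Y -> Y') x y :
  qle (Txi xi (fun a b => r a (be b)) x y) (Txi xi r x (fmap be y)).
Proof.
  rewrite <- (fmap_id T X x) at 2. apply (Txi_nat xi r (fun a => a) be).
Qed.

Definition reflx {X} (a : T X -> X -> V) := forall x, qle qk (a (ret x) x).

Lemma Tcat_refl {X} (a : T X -> X -> V) : Tcat xi a -> reflx a.
Proof. now intros [H _]. Qed.
Lemma Tcat_tr {X} (a : T X -> X -> V) X0 y1 z : Tcat xi a ->
  qle (qten (Txi xi a X0 y1) (a y1 z)) (a (join X0) z).
Proof. intros [_ H]. eapply le_trans; [|apply H]. now apply kl_ge. Qed.

Lemma Txi_refl {X} (a : T X -> X -> V) (x0 : T X) : reflx a ->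
  qle qk (Txi xi a (fmap ret x0) x0).
Proof.
  intro H. eapply le_trans; [|rewrite <- (fmap_id T X x0) at 2; apply Txi_nat].
  apply Txi_diag; auto.
Qed.

Lemma kl_id_l {X Y} (b : T Y -> Y -> V) (phi : T X -> Y -> V) :
  reflx b -> rle phi (kleisli xi b phi).
Proof.
  intros Hb x0 y. eapply le_trans; [|apply (kl_ge xi _ _ _ _ (ret x0) (ret y)); apply join_ret].
  rewrite <- (ten_k_r (phi x0 y)). apply ten_mono; auto. apply Txi_ret; auto.
Qed.

Lemma kl_id_r {X Y} (a : T X -> X -> V) (phi : T X -> Y -> V) :
  reflx a -> rle phi (kleisli xi phi a).
Proof.
  intros Ha x0 y. eapply le_trans; [|apply (kl_ge xi _ _ _ _ (fmap ret x0) x0); apply join_fmap_ret].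
  rewrite <- (qten_unit _ (phi x0 y)) at 1. apply ten_mono_l. now apply Txi_refl.
Qed.

Lemma Tmod_l {X Y} a b (phi : T X -> Y -> V) : Tmod xi a b phi -> rle (kleisli xi phi a) phi.
Proof. now intros [H _]. Qed.
Lemma Tmod_r {X Y} a b (phi : T X -> Y -> V) : Tmod xi a b phi -> rle (kleisli xi b phi) phi.
Proof. now intros [_ H]. Qed.

Lemma Tmod_comp {X Y Z} (a : T X -> X -> V) (b : T Y -> Y -> V) (c : T Z -> Z -> V)
  (phi : T X -> Y -> V) (psi : T Y -> Z -> V) :
  Tmod xi a b phi -> Tmod xi b c psi -> Tmod xi a c (kleisli xi psi phi).
Proof.
  intros H1 H2. split.
  - eapply rle_trans; [apply assoc_le; auto|]. apply kl_mono; auto.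
    apply (Tmod_l _ _ _ H1). apply rle_refl.
  - eapply rle_trans; [apply assoc_ge; auto|]. apply kl_mono; auto.
    apply rle_refl. apply (Tmod_r _ _ _ H2).
Qed.

Lemma flow_mod {X Y} (a : T X -> X -> V) (b : T Y -> Y -> V) (f : X -> Y) :
  Tcat xi b -> Tfun a b f -> Tmod xi a b (flow b f).
Proof.
  intros Hb Hf. split; intros x0 y; apply kl_le; intros X0 y1 E; subst x0.
  - unfold flow. eapply le_trans; [|rewrite join_nat; apply (Tcat_tr b)]; auto.
    apply ten_mono_l. eapply le_trans; [|apply Txi_nat].
    apply Txi_mono; auto.
  - unfold flow. eapply le_trans; [|rewrite join_nat; apply (Tcat_tr b)]; auto.
    apply ten_mono_l. apply Txi_nat_l.
Qed.

Lemma fup_mod {X Y} (a : T X -> X -> V) (b : T Y -> Y -> V) (f : X -> Y) :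
  Tcat xi b -> Tfun a b f -> Tmod xi b a (fup b f).
Proof.
  intros Hb Hf. split; intros y0 x; apply kl_le; intros Y0 x1 E; subst y0.
  - unfold fup. apply (Tcat_tr b); auto.
  - unfold fup. eapply le_trans; [|apply (Tcat_tr b _ (fmap f x1))]; auto.
    apply ten_mono; [|apply Hf]. apply Txi_nat_r.
Qed.

Lemma fun_adj {X Y} (a : T X -> X -> V) (b : T Y -> Y -> V) (f : X -> Y) :
  Tcat xi b -> Tfun a b f -> adjoint xi a b (flow b f) (fup b f).
Proof.
  intros Hb Hf. split.
  - intros x0 x. eapply le_trans; [|apply (kl_ge xi _ _ _ _ (fmap ret x0) (fmap f x0)); apply join_fmap_ret].
    unfold fup. rewrite <- (qten_unit _ (a x0 x)). apply ten_mono; [|apply Hf].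
    eapply le_trans; [|apply Txi_nat]. apply Txi_diag; auto. intro x'.
    unfold flow. rewrite ret_nat. apply (Tcat_refl b Hb).
  - intros y0 y. apply kl_le. intros Y0 x1 E. subst y0. unfold flow.
    eapply le_trans; [|apply (Tcat_tr b)]; auto. apply ten_mono_l. unfold fup. apply Txi_nat_r.
Qed.

Lemma adj_comp {X Y Z} (a : T X -> X -> V) (b : T Y -> Y -> V) (c : T Z -> Z -> V)
  (p1 : T X -> Y -> V) (q1 : T Y -> X -> V) (p2 : T Y -> Z -> V) (q2 : T Z -> Y -> V) :
  reflx b -> Tmod xi a b p1 -> Tmod xi b a q1 -> Tmod xi b c p2 -> Tmod xi c b q2 ->
  adjoint xi a b p1 q1 -> adjoint xi b c p2 q2 ->
  adjoint xi a c (kleisli xi p2 p1) (kleisli xi q1 q2).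
Proof.
  intros Hb M1 N1 M2 N2 [A1 B1] [A2 B2]. split.
  - eapply rle_trans; [exact A1|].
    eapply rle_trans; [|apply assoc_ge; auto].
    apply kl_mono; auto; [|apply rle_refl].
    eapply rle_trans; [|apply assoc_le; auto].
    eapply rle_trans; [apply (kl_id_l b); auto|].
    apply kl_mono; auto; try exact A2; try apply rle_refl.
  - eapply rle_trans; [apply assoc_le; auto|].
    eapply rle_trans; [|exact B2]. apply kl_mono; auto; [|apply rle_refl].
    eapply rle_trans; [apply assoc_ge; auto|].
    eapply rle_trans; [|apply (Tmod_r _ _ _ N2)]. apply kl_mono; auto. apply rle_refl.
Qed.

End C.

Section R.
Context {V : quantale} {T : monad} (xi : T V -> V)
  {HT1 : T_one T} {Hpb : T_weak_pb T} {Hm : join_weak_pb T} {Hxi : strict_topth xi}.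

Lemma k_le_kk : qle (qk : V) (qten qk qk).
Proof. rewrite qten_unit. apply le_refl. Qed.

Lemma dense_epi {X Y} (a : T X -> X -> V) (b : T Y -> Y -> V) (i : X -> Y) :
  Tcat xi b -> Ldense xi b i -> epi_sep xi b i.
Proof.
  intros Hb Hd W d Hdc Hds g h Hg Hh E.
  assert (L : forall g h : Y -> W, Tfun b d g -> Tfun b d h ->
             (forall x, g (i x) = h (i x)) -> fle d g h).
  { clear g h Hg Hh E. intros g h Hg Hh E y.
    eapply le_trans; [apply (Tcat_refl xi b Hb y)|]. rewrite <- Hd.
    apply kl_le. intros Y0 x1 J.
    replace (ret (g y)) with (fmap g (join Y0)) by (rewrite J; apply ret_nat).
    rewrite join_nat. eapply le_trans; [|apply (Tcat_tr xi d _ (fmap (fun x => g (i x)) x1))]; auto.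
    apply ten_mono.
    - unfold fup. eapply le_trans; [|apply Txi_nat]. apply Txi_mono; auto.
    - unfold flow. eapply le_trans; [apply Hh|].
      rewrite fmap_fmap. rewrite (fmap_ext _ (fun x => g (i x))); [apply le_refl|].
      intro. symmetry. apply E. }
  apply (Hds Y b Hb g h Hg Hh); apply L; auto.
Qed.

Lemma part1 {X Y} (a : T X -> X -> V) (b : T Y -> Y -> V) (i : X -> Y) :
  Tcat xi a -> Tcat xi b -> Lcomplete xi b -> Lsep xi b ->
  ffaithful a b i -> Ldense xi b i ->
  reflection_arrow xi a b i /\ epi_sep xi b i.
Proof.
  intros Ha Hb Hc Hs Hff Hd.
  assert (Hi : Tfun a b i). { intros x0 x. rewrite Hff. apply le_refl. }
  split; [split; [exact Hi|] | now apply (dense_epi a)].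
  intros Z c Hcc Hcomp Hcs f Hf.
  assert (Ad1 : adjoint xi b a (fup b i) (flow b i)).
  { split.
    - intros y0 y. rewrite Hd. apply le_refl.
    - intros x0 x. eapply le_trans; [apply (Tmod_r xi _ _ _ (flow_mod xi a b i Hb Hi))|].
      unfold flow. rewrite Hff. apply le_refl. }
  pose proof (adj_comp xi b a c _ _ _ _ (Tcat_refl xi a Ha)
                (fup_mod xi a b i Hb Hi) (flow_mod xi a b i Hb Hi)
                (flow_mod xi a c f Hcc Hf) (fup_mod xi a c f Hcc Hf)
                Ad1 (fun_adj xi a c f Hcc Hf)) as Ad.
  destruct (Hcomp Y b Hb _ _ (Tmod_comp xi _ _ _ _ _ (fup_mod xi a b i Hb Hi) (flow_mod xi a c f Hcc Hf))
              (Tmod_comp xi _ _ _ _ _ (fup_mod xi a c f Hcc Hf) (flow_mod xi a b i Hb Hi)) Ad)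
    as [g [Hg [Hphi Hpsi]]].
  assert (Hgi : forall x, g (i x) = f x).
  { apply (Hcs X a Ha (fun x => g (i x)) f).
    - intros x0 x. eapply le_trans; [apply Hi|]. eapply le_trans; [apply Hg|].
      rewrite fmap_fmap. apply le_refl.
    - exact Hf.
    - intro x. specialize (Hphi (ret (i x)) (f x)). unfold flow in Hphi. rewrite ret_nat in Hphi.
      rewrite <- Hphi. eapply le_trans; [|apply (kl_ge xi _ _ _ _ (ret (ret (i x))) (ret x)); apply join_ret].
      eapply le_trans; [apply k_le_kk|]. apply ten_mono.
      + eapply le_trans; [|apply Txi_ret; auto]. unfold fup. apply (Tcat_refl xi b Hb).
      + unfold flow. rewrite ret_nat. apply (Tcat_refl xi c Hcc).
    - intro x. specialize (Hpsi (ret (f x)) (i x)). unfold fup in Hpsi.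
      rewrite <- Hpsi. eapply le_trans; [|apply (kl_ge xi _ _ _ _ (ret (ret (f x))) (ret x)); apply join_ret].
      eapply le_trans; [apply k_le_kk|]. apply ten_mono.
      + eapply le_trans; [|apply Txi_ret; auto]. unfold fup. apply (Tcat_refl xi c Hcc).
      + unfold flow. rewrite ret_nat. apply (Tcat_refl xi b Hb). }
  exists g. split; [exact Hg|]. split; [exact Hgi|].
  intros g' Hg' Hg'i. apply (dense_epi a b i Hb Hd Z c Hcc Hcs g' g Hg' Hg).
  intro x. rewrite Hg'i. auto.
Qed.

End R.

Section LVS.
Context {V : quantale} {T : monad} (xi : T V -> V)
  {HT1 : T_one T} {Hpb : T_weak_pb T} {Hm : join_weak_pb T} {Hxi : strict_topth xi}.

Definition ev {X} (u : (T X * LV xi X)%type) : V := proj1_sig (snd u) (fst u).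

Lemma LV_intro {X} (q0 : T (LV xi X)) (h : LV xi X) w :
  (forall q : T (T X * LV xi X)%type, fmap snd q = q0 ->
     qle (qten w (xi (fmap ev q))) (proj1_sig h (join (fmap fst q)))) ->
  qle w (LVstr xi X q0 h).
Proof.
  intro H. unfold LVstr. apply inf_glb. intros v [q [E ->]]. apply hom_intro. now apply H.
Qed.

Lemma LV_elim {X} (q : T (T X * LV xi X)%type) (h : LV xi X) :
  qle (qten (LVstr xi X (fmap snd q) h) (xi (fmap ev q))) (proj1_sig h (join (fmap fst q))).
Proof.
  apply hom_elim. unfold LVstr. apply inf_lb. exists q. split; reflexivity.
Qed.

Lemma LVpred_use {X} (h : LV xi X) XX : qle (xi (fmap (proj1_sig h) XX)) (proj1_sig h (join XX)).
Proof.
  destruct h as [h Hh]. simpl. specialize (Hh XX (join XX)). unfold absstr, graph in Hh.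
  destruct (excluded_middle_informative (join XX = join XX)); [|congruence].
  apply hom_elim in Hh. rewrite qten_unit in Hh. exact Hh.
Qed.

Lemma ev_fib {X Z} (q : T (T X * LV xi X)%type) (G : Z -> LV xi X) (zz : T Z) :
  fmap snd q = fmap G zz ->
  exists Q : T {p : ((T X * LV xi X) * Z)%type | snd (fst p) = G (snd p)},
    fmap (fun p => fst (proj1_sig p)) Q = q /\ fmap (fun p => snd (proj1_sig p)) Q = zz /\
    xi (fmap ev q) = xi (fmap (fun p => proj1_sig (G (snd (proj1_sig p))) (fst (fst (proj1_sig p)))) Q).
Proof.
  intro E. destruct (Hpb _ _ _ snd G q zz E) as [Q [Q1 Q2]].
  exists Q. split; [auto|split;[auto|]].
  rewrite <- Q1, fmap_fmap. f_equal. apply fmap_ext. intros [[[x h] z] e]. simpl in *. unfold ev. simpl. now rewrite e.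
Qed.

Lemma ev_pt {X} (q : T (T X * LV xi X)%type) (h : LV xi X) :
  fmap snd q = ret h -> xi (fmap ev q) = xi (fmap (proj1_sig h) (fmap fst q)).
Proof.
  intro E. destruct (ev_fib q (fun _ : unit => h) (ret tt)) as [Q [Q1 [Q2 Q3]]].
  { now rewrite ret_nat. }
  rewrite Q3. rewrite <- Q1, !fmap_fmap. reflexivity.
Qed.

Lemma LV_refl {X} (h : LV xi X) : qle qk (LVstr xi X (ret h) h).
Proof.
  apply LV_intro. intros q E. rewrite qten_unit, (ev_pt q h E). apply LVpred_use.
Qed.

Lemma LV_Tcat X : Tcat xi (LVstr xi X).
Proof.
  split; [intro; apply LV_refl|].
  intros p0 h. apply kl_le. intros P qq E.
  apply LV_intro. intros q Eq.
  rewrite <- qten_assoc. unfold Txi at 1. apply ten_sup_l_le. intros v [w [W1 [W2 ->]]].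
  rewrite qten_assoc.
  destruct (Hm _ _ snd P q) as [QQ [QQ1 QQ2]]. { congruence. }
  destruct (Hpb _ _ _ (fmap snd) fst QQ w) as [R [R1 R2]]. { congruence. }
  set (q' := fmap (fun p : {p : (T (T X * LV xi X)%type * (T (LV xi X) * LV xi X))%type
                        | fmap snd (fst p) = fst (snd p)} =>
                     (join (fmap fst (fst (proj1_sig p))), snd (snd (proj1_sig p)))) R).
  assert (Hs : fmap snd q' = qq).
  { unfold q'. rewrite fmap_fmap. rewrite <- W2, <- R2, fmap_fmap. reflexivity. }
  assert (Hf : join (fmap fst q') = join (fmap fst q)).
  { unfold q'. rewrite fmap_fmap. simpl.
    rewrite <- (fmap_fmap (fun p => fmap fst (fst (proj1_sig p))) join).
    rewrite <- join_assoc. rewrite <- (fmap_fmap (fun p => fst (proj1_sig p)) (fmap fst)).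
    rewrite R1, <- join_nat, QQ2. reflexivity. }
  rewrite <- Hf. eapply le_trans; [|rewrite <- Hs; apply LV_elim].
  rewrite Hs, <- qten_assoc, ten_swap. apply ten_mono_r.
  subst w q. unfold q'. rewrite !fmap_fmap.
  rewrite join_nat, <- xi_join, <- R1, !fmap_fmap, <- xi_ten.
  apply xi_mono; [exact Hxi|]. intros [[Q0 [p1 g]] e]. simpl in *. subst p1.
  unfold ev at 2. simpl. apply LV_elim. all: exact Hxi.
Qed.


Lemma induced_Tcat {Y} (P : Y -> Prop) (b : T Y -> Y -> V) :
  Tcat xi b -> Tcat xi (induced P b).
Proof.
  intros Hb. split.
  - intro s. unfold induced. rewrite ret_nat. apply (Tcat_refl xi b Hb).
  - intros x0 z. apply kl_le. intros X0 y1 E. subst x0. unfold induced.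
    rewrite join_nat. eapply le_trans; [|apply (Tcat_tr xi b)]; auto.
    apply ten_mono_l. apply Txi_nat.
Qed.

Section Tl.
Context {X : Type} (a : T X -> X -> V) (Ha : Tcat xi a).

Definition tproj (p : tildeX xi a) : LV xi X := proj1_sig (proj1_sig p).

Lemma B_eq p0 psi : tildestr xi a p0 psi = LVstr xi X (fmap tproj p0) (tproj psi).
Proof. unfold tildestr, hatstr, induced. rewrite fmap_fmap. reflexivity. Qed.

Lemma tilde_Tcat : Tcat xi (tildestr xi a).
Proof. apply induced_Tcat, induced_Tcat, LV_Tcat. Qed.

Lemma tilde_eq (p1 p2 : tildeX xi a) : (forall x0, tilde_fun p1 x0 = tilde_fun p2 x0) -> p1 = p2.
Proof.
  intro H. apply functional_extensionality in H.
  destruct p1 as [[[h1 l1] k1] t1], p2 as [[[h2 l2] k2] t2]. unfold tilde_fun in H. simpl in H.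
  subst h2. assert (l1 = l2) by apply proof_irrelevance. subst l2.
  assert (k1 = k2) by apply proof_irrelevance. subst k2.
  assert (t1 = t2) by apply proof_irrelevance. subst t2. reflexivity.
Qed.

Lemma B_ret_pw (p1 p2 : tildeX xi a) x0 :
  qle qk (tildestr xi a (ret p1) p2) -> qle (tilde_fun p1 x0) (tilde_fun p2 x0).
Proof.
  intro H. rewrite B_eq, ret_nat in H.
  pose proof (LV_elim (ret (x0, tproj p1)) (tproj p2)) as L.
  rewrite !ret_nat in L. simpl in L. rewrite join_ret, xi_ret in L. unfold ev in L; simpl in L.
  eapply le_trans; [|exact L]. rewrite <- (qten_unit _ (tilde_fun p1 x0)) at 1.
  apply ten_mono_l. exact H. all: exact Hxi.
Qed.

Lemma tilde_Lsep : Lsep xi (tildestr xi a).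
Proof.
  intros Z c Hc f g Hf Hg H1 H2 z. apply tilde_eq. intro x0.
  apply qle_anti; apply B_ret_pw; auto.
Qed.

Definition rr (y0 x0 : T X) : V := qsup (fun v => exists XX, join XX = y0 /\ v = Txi xi a XX x0).

Lemma opstr_le XX y0 : qle (opstr xi a XX y0) (xi (fmap (fun x0 => rr y0 x0) XX)).
Proof. unfold opstr. eapply le_trans; [apply Txi_pt_le; try assumption|]. apply le_refl. Qed.

Lemma opstr_ge P x0 : qle (Txi xi a P x0) (opstr xi a (ret x0) (join P)).
Proof.
  unfold opstr. eapply le_trans; [|apply Txi_ret; auto]. unfold converse.
  apply qsup_ub. eauto.
Qed.

Definition modp (h : T X -> V) := forall P x0, qle (qten (Txi xi a P x0) (h x0)) (h (join P)).

Lemma hat_of_mod (h : LV xi X) : modp (proj1_sig h) -> hatpred xi a h.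
Proof.
  intros Hh XX y0. apply hom_intro. eapply le_trans; [apply ten_mono_l, opstr_le|].
  rewrite <- xi_ten. apply xi_mono_le; try assumption. intro x0. unfold rr. apply ten_sup_l_le.
  intros v [P [E ->]]. subst. apply Hh. all: assumption.
Qed.

Lemma mod_of_hat (h : hatX xi a) : modp (proj1_sig (proj1_sig h)).
Proof.
  destruct h as [[h Hl] Hh]. simpl. intros P x0. specialize (Hh (ret x0) (join P)).
  apply hom_elim in Hh. simpl in Hh. rewrite ret_nat, xi_ret in Hh.
  eapply le_trans; [|exact Hh]. apply ten_mono_l. apply opstr_ge. all: assumption.
Qed.

End Tl.

End LVS.

Section Y.
Context {V : quantale} {T : monad} (xi : T V -> V)
  {HT1 : T_one T} {Hpb : T_weak_pb T} {Hm : join_weak_pb T} {Hxi : strict_topth xi}.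
Context {X : Type} (a : T X -> X -> V) (Ha : Tcat xi a).

Lemma yLVp x : LVpred xi X (fun x0 => a x0 x).
Proof.
  intros XX x0. unfold absstr, graph, homxi.
  destruct (excluded_middle_informative (join XX = x0)) as [E|E]; [|apply bot_le].
  subst x0. apply hom_intro. rewrite qten_unit.
  eapply le_trans; [|apply (Tcat_tr xi a XX (ret x) x Ha)].
  rewrite <- (ten_k_r (xi _)). apply ten_mono.
  - apply Txi_pt; assumption.
  - apply (Tcat_refl xi a Ha).
Qed.

Definition yLV x : LV xi X := exist _ (fun x0 => a x0 x) (yLVp x).
Definition yhat x : hatX xi a :=
  exist _ (yLV x) (hat_of_mod xi a (yLV x) (fun P x0 => Tcat_tr xi a P x0 x Ha)).

Lemma const_Tfun x : Tfun (@Estr V T) a (fun _ : unit => x).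
Proof. intros u t. unfold Estr. rewrite fmap_const; try assumption. apply (Tcat_refl xi a Ha). Qed.

Lemma ytight x : tight xi a (yhat x).
Proof.
  exists (flow a (fun _ : unit => x)). split.
  - apply flow_mod; auto. apply const_Tfun.
  - exact (fun_adj xi Estr a (fun _ => x) Ha (const_Tfun x)).
Qed.

Definition ytl x : tildeX xi a := exist _ (yhat x) (ytight x).

Lemma ytl_fun x x0 : tilde_fun (ytl x) x0 = a x0 x.
Proof. reflexivity. Qed.

Notation B := (tildestr xi a).

Lemma Yoneda (psi : tildeX xi a) x0 : B (fmap ytl x0) psi = tilde_fun psi x0.
Proof.
  rewrite B_eq, fmap_fmap. apply qle_anti.
  - pose proof (LV_elim xi (fmap (fun x' => (ret x', yLV x')) x0) (tproj xi a psi)) as L.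
    rewrite !fmap_fmap in L. simpl in L. rewrite join_fmap_ret in L.
    eapply le_trans; [|exact L]. rewrite <- (ten_k_r (LVstr _ _ _ _)) at 1.
    apply ten_mono_r. apply xi_mono_ge; try assumption. intro x. unfold ev. simpl.
    apply (Tcat_refl xi a Ha).
  - apply LV_intro. intros q E.
    destruct (ev_fib xi q (fun x => tproj xi a (ytl x)) x0 E) as [Q [Q1 [Q2 Q3]]].
    rewrite Q3. simpl. rewrite qten_comm.
    eapply le_trans; [|apply (mod_of_hat xi a (proj1_sig psi) (fmap fst q) x0)].
    apply ten_mono_l.
    eapply le_trans; [|apply (Txi_ge xi a (fmap (fun p => (fst (fst (proj1_sig p)), snd (proj1_sig p))) Q))].
    + rewrite fmap_fmap. apply le_refl.
    + rewrite <- Q1, !fmap_fmap. reflexivity.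
    + rewrite <- Q2, !fmap_fmap. reflexivity.
Qed.

Lemma y_ff : ffaithful a B ytl.
Proof. intros x0 x. rewrite Yoneda. reflexivity. Qed.

Lemma y_Tfun : Tfun a B ytl.
Proof. intros x0 x. rewrite y_ff. apply le_refl. Qed.

Lemma B_Tcat : Tcat xi B.
Proof. apply tilde_Tcat; assumption. Qed.

Lemma Estr_refl : reflx (@Estr V T).
Proof. intro. apply le_refl. Qed.

Lemma left_le_B (psi : tildeX xi a) (phi : T unit -> X -> V) :
  adjoint xi Estr a phi (asmod (proj1_sig psi)) ->
  forall u x, qle (phi u x) (B (ret psi) (ytl x)).
Proof.
  intros [_ Ad] u x. rewrite (HT1 u (ret tt)).
  rewrite B_eq, ret_nat. apply LV_intro. intros q E.
  rewrite (ev_pt xi q _ E). rewrite qten_comm.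
  eapply le_trans; [|apply (Ad (join (fmap fst q)) x)].
  eapply le_trans; [|apply (kl_ge xi _ _ _ _ (fmap fst q) (ret tt) eq_refl)].
  apply ten_mono_l. eapply le_trans; [|apply (Txi_pt xi (asmod (proj1_sig psi)))]. apply le_refl.
Qed.

Lemma dens1 (psi : tildeX xi a) p0 :
  qle (B p0 psi) (kleisli xi (asmod (proj1_sig psi)) (fup B ytl) p0 tt).
Proof.
  destruct (proj2_sig psi) as [phi [Hmod Hadj]].
  set (pu := fup B (fun _ : unit => psi)).
  change (B p0 psi) with (pu p0 tt).
  eapply le_trans; [apply (kl_id_l xi Estr pu Estr_refl)|].
  eapply le_trans; [apply (kl_mono xi _ _ pu pu (rle_refl pu) (proj1 Hadj))|].
  eapply le_trans; [apply assoc_le; assumption|].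
  apply kl_mono; [assumption| |apply rle_refl].
  intros p1 x. apply kl_le. intros P u E. subst p1.
  rewrite (HT1 u (ret tt)).
  eapply le_trans; [|apply (Tcat_tr xi B P (ret psi) (ytl x) B_Tcat)].
  apply ten_mono.
  - eapply le_trans; [apply Txi_pt_le; assumption|].
    apply (Txi_pt xi B P psi).
  - apply (left_le_B psi phi Hadj).
Qed.

Lemma dens2 (psi : tildeX xi a) p0 :
  qle (kleisli xi (asmod (proj1_sig psi)) (fup B ytl) p0 tt)
      (kleisli xi (flow B ytl) (fup B ytl) p0 psi).
Proof.
  apply kl_le. intros P x0 E. eapply le_trans; [|apply (kl_ge xi _ _ _ _ P x0 E)].
  apply ten_mono_r. unfold flow. rewrite Yoneda. apply le_refl.
Qed.

Lemma y_dense : Ldense xi B ytl.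
Proof.
  intros p0 psi. apply qle_anti.
  - apply (proj2 (fun_adj xi a B ytl B_Tcat y_Tfun)).
  - eapply le_trans; [apply dens1|apply dens2].
Qed.

Lemma dens_eq (psi : tildeX xi a) p0 :
  B p0 psi = kleisli xi (asmod (proj1_sig psi)) (fup B ytl) p0 tt.
Proof.
  apply qle_anti; [apply dens1|]. eapply le_trans; [apply dens2|]. rewrite y_dense. apply le_refl.
Qed.

End Y.

Section G.
Context {V : quantale} {T : monad} (xi : T V -> V)
  {HT1 : T_one T} {Hpb : T_weak_pb T} {Hm : join_weak_pb T} {Hxi : strict_topth xi}.

Lemma restrict_eq {X Y Z} (b : T Y -> Y -> V) (f : X -> Y) (psi : T Y -> Z -> V) :
  Tcat xi b -> rle (kleisli xi psi b) psi ->
  forall x0 z, kleisli xi psi (flow b f) x0 z = psi (fmap f x0) z.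
Proof.
  intros Hb Hp x0 z. apply qle_anti.
  - apply kl_le. intros P p E. subst x0. eapply le_trans; [|apply Hp].
    rewrite join_nat. eapply le_trans; [|apply (kl_ge xi _ _ _ _ (fmap (fmap f) P) p eq_refl)].
    apply ten_mono_l. unfold flow. apply Txi_nat_l.
  - eapply le_trans; [|apply (kl_ge xi _ _ _ _ (fmap ret x0) (fmap f x0)); apply join_fmap_ret].
    rewrite <- (qten_unit _ (psi _ _)) at 1. apply ten_mono_l.
    eapply le_trans; [|apply Txi_nat_r]. eapply le_trans; [|apply Txi_nat_l].
    apply Txi_diag; try assumption. intro x. unfold flow. rewrite ret_nat. apply (Tcat_refl xi b Hb).
Qed.

Lemma const_Tfun' {Z} (c : T Z -> Z -> V) z : Tcat xi c -> Tfun (@Estr V T) c (fun _ : unit => z).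
Proof. intros Hc u t. unfold Estr. rewrite fmap_const; try assumption. apply (Tcat_refl xi c Hc). Qed.

Lemma dense_ff_adj {X Y} (a : T X -> X -> V) (b : T Y -> Y -> V) (i : X -> Y) :
  Tcat xi b -> Tfun a b i -> ffaithful a b i -> Ldense xi b i ->
  adjoint xi b a (fup b i) (flow b i).
Proof.
  intros Hb Hi Hff Hd. split.
  - intros y0 y. rewrite Hd. apply le_refl.
  - intros x0 x. eapply le_trans; [apply (Tmod_r xi _ _ _ (flow_mod xi a b i Hb Hi))|].
    unfold flow. rewrite Hff. apply le_refl.
Qed.

Section Cp.
Context {X : Type} (a : T X -> X -> V) (Ha : Tcat xi a).
Notation B := (tildestr xi a).
Notation ytl := (ytl xi a Ha).

Lemma B_complete : Lcomplete xi B.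
Proof.
  intros Z c Hc phi psi Mphi Mpsi Hadj.
  pose proof (B_Tcat xi a) as HB.
  pose proof (y_Tfun xi a Ha) as Hy.
  pose proof (y_ff xi a Ha) as Hyff.
  pose proof (y_dense xi a Ha) as Hyd.
  set (rho := kleisli xi psi (flow B ytl)).
  assert (Hrho : forall x0 z, rho x0 z = psi (fmap ytl x0) z).
  { apply restrict_eq; auto. apply (Tmod_l xi _ _ _ Mpsi). }
  assert (Mrho : Tmod xi a c rho) by (apply (Tmod_comp xi a B c); auto; apply flow_mod; auto).
  assert (LVp : forall z, LVpred xi X (fun x0 => rho x0 z)).
  { intros z XX x0. unfold absstr, graph, homxi.
    destruct (excluded_middle_informative (join XX = x0)) as [E|E]; [|apply bot_le].
    subst x0. apply hom_intro. rewrite qten_unit.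
    eapply le_trans; [|apply (Tmod_r xi _ _ _ Mrho)].
    eapply le_trans; [|apply (kl_ge xi _ _ _ _ XX (ret z) eq_refl)].
    rewrite <- (ten_k_r (xi _)). apply ten_mono.
    - apply Txi_pt; assumption.
    - apply (Tcat_refl xi c Hc). }
  assert (Mp : forall z, modp xi a (fun x0 => rho x0 z)).
  { intros z P x0. eapply le_trans; [|apply (Tmod_l xi _ _ _ Mrho)].
    apply (kl_ge xi _ _ _ _ P x0 eq_refl). }
  set (thLV := fun z => exist (LVpred xi X) (fun x0 => rho x0 z) (LVp z)).
  set (thhat := fun z => exist (hatpred xi a) (thLV z) (hat_of_mod xi a (thLV z) (Mp z))).
  assert (Tt : forall z, tight xi a (thhat z)).
  { intro z. set (zc := fun _ : unit => z).
    pose proof (const_Tfun' c z Hc) as Hz.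
    assert (M1 : Tmod xi Estr B (kleisli xi phi (flow c zc))).
    { apply (Tmod_comp xi _ c); auto. apply flow_mod; auto. }
    assert (M2 : Tmod xi B Estr (kleisli xi (fup c zc) psi)).
    { apply (Tmod_comp xi _ c); auto. apply fup_mod; auto. }
    pose proof (adj_comp xi Estr c B _ _ _ _ (Tcat_refl xi c Hc)
                  (flow_mod xi _ _ _ Hc Hz) (fup_mod xi _ _ _ Hc Hz) Mphi Mpsi
                  (fun_adj xi _ _ _ Hc Hz) Hadj) as A1.
    pose proof (adj_comp xi Estr B a _ _ _ _ (Tcat_refl xi B HB) M1 M2
                  (fup_mod xi _ _ _ HB Hy) (flow_mod xi _ _ _ HB Hy) A1
                  (dense_ff_adj a B ytl HB Hy Hyff Hyd)) as A2.
    exists (kleisli xi (fup B ytl) (kleisli xi phi (flow c zc))). split.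
    - apply (Tmod_comp xi _ B); auto. apply fup_mod; auto.
    - replace (asmod (thhat z)) with (kleisli xi (kleisli xi (fup c zc) psi) (flow B ytl)); [exact A2|].
      apply functional_extensionality; intro x0. apply functional_extensionality; intros [].
      rewrite restrict_eq; auto; [|apply (Tmod_l xi _ _ _ M2)].
      unfold asmod. simpl. rewrite Hrho. apply qle_anti.
      + apply (Tmod_r xi _ _ _ Mpsi).
      + apply (kl_id_l xi c psi (Tcat_refl xi c Hc)). }
  set (f := fun z => exist (tight xi a) (thhat z) (Tt z) : tildeX xi a).
  assert (Hfup : forall p0 z, psi p0 z = B p0 (f z)).
  { intros p0 z. rewrite (dens_eq xi a Ha).
    change (kleisli xi (asmod (proj1_sig (f z))) (fup B ytl) p0 tt) with
           (kleisli xi rho (fup B ytl) p0 z).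
    assert (Hd' : rle (kleisli xi (flow B ytl) (fup B ytl)) B /\ rle B (kleisli xi (flow B ytl) (fup B ytl))).
    { split; intros ? ?; rewrite Hyd; apply le_refl. }
    apply qle_anti.
    - eapply le_trans; [apply (kl_id_r xi B psi (Tcat_refl xi B HB))|].
      eapply le_trans; [apply (kl_mono xi psi psi _ _ (proj2 Hd') (rle_refl psi))|].
      apply assoc_ge; assumption.
    - eapply le_trans; [apply assoc_le; assumption|].
      eapply le_trans; [apply (kl_mono xi psi psi _ _ (proj1 Hd') (rle_refl psi))|].
      apply (Tmod_l xi _ _ _ Mpsi). }
  assert (Hf : Tfun c B f).
  { intros z0 z. rewrite B_eq, fmap_fmap. apply LV_intro. intros q E.
    destruct (ev_fib xi q (fun z => tproj xi a (f z)) z0 E) as [Q [Q1 [Q2 Q3]]].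
    rewrite Q3. simpl. rewrite qten_comm.
    eapply le_trans; [|apply (Tmod_r xi _ _ _ Mrho)].
    eapply le_trans; [|apply (kl_ge xi _ _ _ _ (fmap fst q) z0 eq_refl)].
    apply ten_mono_l.
    eapply le_trans; [|apply (Txi_ge xi rho (fmap (fun p => (fst (fst (proj1_sig p)), snd (proj1_sig p))) Q))].
    + rewrite fmap_fmap. apply le_refl.
    + rewrite <- Q1, !fmap_fmap. reflexivity.
    + rewrite <- Q2, !fmap_fmap. reflexivity. }
  assert (Hfu1 : rle (fup B f) psi) by (intros ? ?; rewrite Hfup; apply le_refl).
  assert (Hfu2 : rle psi (fup B f)) by (intros ? ?; rewrite Hfup; apply le_refl).
  pose proof (fun_adj xi c B f HB Hf) as [F1 F2].
  pose proof (flow_mod xi c B f HB Hf) as Mfs.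
  exists f. split; [exact Hf|]. split; [|intros; apply Hfup].
  intros z0 p. apply qle_anti.
  - eapply le_trans; [apply (kl_id_r xi c phi (Tcat_refl xi c Hc))|].
    eapply le_trans; [apply (kl_mono xi phi phi _ _ F1 (rle_refl phi))|].
    eapply le_trans; [apply assoc_ge; assumption|].
    eapply le_trans; [apply kl_mono; [assumption|apply rle_refl|]|].
    { apply kl_mono; [assumption|exact Hfu1|apply rle_refl]. }
    eapply le_trans; [apply kl_mono; [assumption|apply rle_refl|exact (proj2 Hadj)]|].
    apply (Tmod_r xi _ _ _ Mfs).
  - eapply le_trans; [apply (kl_id_r xi c (flow B f) (Tcat_refl xi c Hc))|].
    eapply le_trans; [apply (kl_mono xi _ _ _ _ (proj1 Hadj) (rle_refl _))|].
    eapply le_trans; [apply assoc_ge; assumption|].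
    eapply le_trans; [apply kl_mono; [assumption|apply rle_refl|]|].
    { apply kl_mono; [assumption|exact Hfu2|apply rle_refl]. }
    eapply le_trans; [apply kl_mono; [assumption|apply rle_refl|exact F2]|].
    apply (Tmod_r xi _ _ _ Mphi).
Qed.

End Cp.
End G.

Theorem mainTheorem18 (V : quantale) (T : monad) (xi : T V -> V)
  (HT1 : T_one T) (Hpb : T_weak_pb T) (Hm : join_weak_pb T)
  (Hxi : strict_topth xi) :
  forall (X : Type) (a : T X -> X -> V), Tcat xi a -> Lsep xi a ->
    (forall (Y : Type) (b : T Y -> Y -> V) (i : X -> Y),
        Tcat xi b -> Lcomplete xi b -> Lsep xi b ->
        Tfun a b i -> ffaithful a b i -> Ldense xi b i ->
        reflection_arrow xi a b i /\ epi_sep xi b i) /\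
    (Tcat xi (tildestr xi a) /\ Lcomplete xi (tildestr xi a) /\
     Lsep xi (tildestr xi a) /\
     exists y : X -> tildeX xi a,
       (forall x x0, tilde_fun (y x) x0 = a x0 x) /\
       Tfun a (tildestr xi a) y /\ ffaithful a (tildestr xi a) y /\
       Ldense xi (tildestr xi a) y /\
       reflection_arrow xi a (tildestr xi a) y /\ epi_sep xi (tildestr xi a) y).
Proof.
  intros X a Ha Hsa.
  assert (P1 : forall (Y : Type) (b : T Y -> Y -> V) (i : X -> Y),
        Tcat xi b -> Lcomplete xi b -> Lsep xi b ->
        Tfun a b i -> ffaithful a b i -> Ldense xi b i ->
        reflection_arrow xi a b i /\ epi_sep xi b i).
  { intros Y b i Hb Hc Hs Hi Hff Hd. eapply part1; eauto. }
  split; [exact P1|].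
  assert (HB : Tcat xi (tildestr xi a)) by (eapply B_Tcat; eauto).
  assert (HC : Lcomplete xi (tildestr xi a)) by (eapply B_complete; eauto).
  assert (HS : Lsep xi (tildestr xi a)) by (eapply tilde_Lsep; eauto).
  split; [exact HB|]. split; [exact HC|]. split; [exact HS|].
  exists (ytl xi a Ha).
  assert (Hy : Tfun a (tildestr xi a) (ytl xi a Ha)) by (eapply y_Tfun; eauto).
  assert (Hff : ffaithful a (tildestr xi a) (ytl xi a Ha)) by (eapply y_ff; eauto).
  assert (Hd : Ldense xi (tildestr xi a) (ytl xi a Ha)) by (eapply y_dense; eauto).
  split; [intros; reflexivity|]. split; [exact Hy|]. split; [exact Hff|]. split; [exact Hd|].
  apply P1; auto.
Qed.
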